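(* Let $(\vec f,\vec\theta,\rho,\vec{\mathcal J})$ be a Definitional SMTO problem over a background theory $T$. (i) Every conjunction $A$ of assumptions generated by $\vec{\mathcal J}$ is $T$-satisfiable when $\vec\theta$ is treated as uninterpreted functions. (ii) The problem cannot be both satisfiable and unsatisfiable. (iii) Suppose $\exists\vec f.\forall\vec\theta.\,A\Rightarrow\rho$ is $T$-satisfiable for a conjunction $A$ of generated assumptions. Then $\exists\vec f.\forall\vec\theta.\,A'\Rightarrow\rho$ is $T$-satisfiable for every conjunction $A'\supseteq A$ of generated assumptions. That is, further oracle calls cannot invalidate a result of ''satisfiable''.
   Context: An oracle interface is a tuple $\mathcal I=(\vec y,\vec z,\alpha_{gen},\beta_{gen})$, where $\vec y$ (the query domain) and $\vec z$ (the response co-domain) are lists of sorted variables, and $\alpha_{gen}$ (the assumption generator) and $\beta_{gen}$ (the constraint generator) are formulas whose free variables are among $\vec y,\vec z$. Each oracle interface has an associated oracle, which on a tuple of values $\vec c$ of the sorts of $\vec y$ returns a tuple of values $\vec d$ of the sorts of $\vec z$. If calling the oracle on $\vec c$ returns $\vec d$, then $\alpha_{gen}\cdot\{\vec y\to\vec c,\vec z\to\vec d\}$ is an assumption generated by $\mathcal I$, and $\beta_{gen}\cdot\{\vec y\to\vec c,\vec z\to\vec d\}$ is a constraint generated by $\mathcal I$. Here $e\cdot\{x\to t\}$ denotes substitution and $\approx$ denotes equality. An SMTO problem is a tuple $(\vec f,\vec\theta,\rho,\vec{\mathcal I})$, where $\vec f$ are ordinary function symbols, $\vec\theta$ are oracle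 function symbols, $\rho$ is a formula in a background theory $T$ whose free function symbols are $\vec f\uplus\vec\theta$, and $\vec{\mathcal I}$ is a set of oracle interfaces. The problem is unsatisfiable if $\exists\vec f.\exists\vec\theta.\,A\wedge\rho\wedge B$ is $T$-unsatisfiable, and it is satisfiable if $\exists\vec f.\forall\vec\theta.\,A\Rightarrow(\rho\wedge B)$ is $T$-satisfiable. In each case $A$ (respectively $B$) is some conjunction of assumptions (respectively constraints) generated by $\vec{\mathcal I}$. An oracle interface $\mathcal J$ defines an oracle function symbol $\theta$ if it has the form $((y_1,\dots,y_j),(z),\ \theta(y_1,\dots,y_j)\approx z,\ \text{true})$ and its associated oracle is functional, i.e. it always returns the same output on the same input. An SMTO problem $(\vec f,\vec\theta,\rho,\vec{\mathcal J})$ is in Definitional SMTO if $\vec\theta=(\theta_1,\dots,\theta_n)$, $\vec{\mathcal J}=(\mathcal J_1,\dots,\mathcal J_n)$, and $\mathcal J_i$ defines $\theta_i$ for every $i$. In particular, all generated constraints are trivially true, so $B$ may be taken to be empty. *)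

(* Defs.v *)
From mathcomp Require Import all_boot.
From Stdlib Require List.

Set Implicit Arguments.
Unset Strict Implicit.
Unset Printing Implicit Defensive.

(* A background theory T, presented semantically by its class of models.
   - [tsort]    : the sorts of T;
   - [value s]  : the values of sort s (the things oracles receive / return);
   - [model]   : the T-models;
   - [dom M s] : the (nonempty) carrier of sort s in the model M;
   - [valI]    : interpretation of values in a model; distinct values denote
                 distinct elements (as for numerals, constructors, ...). *)
Record theory := Theory {
  tsort : Type;
  value : tsort -> Type;
  model : Type;
  dom : model -> tsort -> Type;
  dom_inhabited : forall (M : model) (s : tsort), dom M s;
  valI : forall (M : model) (s : tsort), value s -> dom M s;
  valI_inj : forall (M : model) (s : tsort), injective (@valI M s)
}.

Fixpoint tup (S : Type) (D : S -> Type) (l : seq S) : Type :=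
  match l with
  | [::] => unit
  | s :: l' => (D s * tup D l')%type
  end.

Fixpoint tmap (S : Type) (D E : S -> Type) (g : forall s, D s -> E s)
  (l : seq S) : tup D l -> tup E l :=
  match l with
  | [::] => fun _ => tt
  | s :: l' => fun x => (g s x.1, tmap g x.2)
  end.

Section Syntax.
Variable T : theory.

Definition fsig := (seq (tsort T) * tsort T)%type.

Definition finterp (M : model T) (I : Type) (sg : I -> fsig) :=
  forall i : I, tup (dom M) (sg i).1 -> dom M (sg i).2.

Variables (m n : nat) (sf : 'I_m -> fsig) (st : 'I_n -> fsig).

(* A formula whose free function symbols are among f (signatures sf) and
   theta (signatures st), given by its truth value in every T-model under
   every interpretation of f and theta. *)
Definition formula :=
  forall M : model T, finterp M sf -> finterp M st -> Prop.

(* A formula with additional free variables of sorts ys (query) and zs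
   (response). *)
Definition oformula (ys zs : seq (tsort T)) :=
  forall M : model T, finterp M sf -> finterp M st ->
    tup (dom M) ys -> tup (dom M) zs -> Prop.

(* An oracle interface (y, z, alpha_gen, beta_gen) with its oracle; the oracle
   is a relation "on query c it may return d". *)
Record interface := Interface {
  qdom : seq (tsort T);
  rdom : seq (tsort T);
  agen : oformula qdom rdom;
  bgen : oformula qdom rdom;
  oracle : tup (@value T) qdom -> tup (@value T) rdom -> Prop
}.

Definition functional_oracle (J : interface) :=
  forall c d d', @oracle J c d -> @oracle J c d' -> d = d'.

Definition def_interface (i : 'I_n)
    (orc : tup (@value T) (st i).1 -> tup (@value T) [:: (st i).2] -> Prop) :
    interface :=
  @Interface (st i).1 [:: (st i).2]
    (fun M F Th y z => Th i y = z.1)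
    (fun _ _ _ _ _ => True)
    orc.

Variables (rho : formula) (k : nat) (Is : 'I_k -> interface).

(* One oracle call: an interface, a query c and a response d of its oracle.
   It generates the assumption alpha_gen{y->c,z->d} and the constraint
   beta_gen{y->c,z->d}. *)
Record call := Call {
  c_idx : 'I_k;
  c_q : tup (@value T) (qdom (Is c_idx));
  c_r : tup (@value T) (rdom (Is c_idx));
  c_ok : @oracle (Is c_idx) c_q c_r
}.

(* A conjunction of generated assumptions (resp. constraints) is given by a
   finite list of oracle calls. *)
Definition holdsA (A : seq call) (M : model T) (F : finterp M sf)
    (Th : finterp M st) : Prop :=
  forall c, List.In c A ->
    @agen (Is (c_idx c)) M F Th (tmap (@valI T M) (c_q c))
                             (tmap (@valI T M) (c_r c)).

Definition holdsB (B : seq call) (M : model T) (F : finterp M sf)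
    (Th : finterp M st) : Prop :=
  forall c, List.In c B ->
    @bgen (Is (c_idx c)) M F Th (tmap (@valI T M) (c_q c))
                             (tmap (@valI T M) (c_r c)).

Definition smto_unsat : Prop :=
  exists A B : seq call,
    ~ (exists (M : model T) (F : finterp M sf) (Th : finterp M st),
          holdsA A F Th /\ rho F Th /\ holdsB B F Th).

Definition smto_sat : Prop :=
  exists A B : seq call,
    exists (M : model T) (F : finterp M sf),
      forall Th : finterp M st, holdsA A F Th -> rho F Th /\ holdsB B F Th.

End Syntax.

(* Main.v *)
Require Import Defs.
From mathcomp Require Import all_boot.
From Stdlib Require List.
From Stdlib Require Import ClassicalEpsilon.

Lemma tmap_inj (S : Type) (D E : S -> Type) (g : forall s, D s -> E s)
  (Hg : forall s, injective (g s)) (l : seq S) : injective (@tmap S D E g l).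
Proof.
elim: l => [|s l IH] /=; first by move=> [] [].
move=> [a x] [b y] /= [] /Hg -> /IH -> //.
Qed.

Section Good.
Variables (T : theory) (m n : nat) (sf : 'I_m -> fsig T) (st : 'I_n -> fsig T).
Variable (orc : forall i : 'I_n,
           tup (@value T) (st i).1 -> tup (@value T) [:: (st i).2] -> Prop).
Variable (M : model T).

Definition goodTh : finterp M st := fun i y =>
  match excluded_middle_informative
     (exists qd : tup (@value T) (st i).1 * tup (@value T) [:: (st i).2],
        @orc i qd.1 qd.2 /\ tmap (@valI T M) qd.1 = y) with
  | left H => (tmap (@valI T M) (proj1_sig (constructive_indefinite_description _ H)).2).1
  | right _ => dom_inhabited M (st i).2
  end.

Lemma goodTh_ok (Hfun : forall i q d d', @orc i q d -> @orc i q d' -> d = d')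
  i q d : @orc i q d -> goodTh i (tmap (@valI T M) q) = (tmap (@valI T M) d).1.
Proof.
move=> Hqd; rewrite /goodTh.
case: excluded_middle_informative => [H|H]; last first.
  by exfalso; apply: H; exists (q, d).
case: constructive_indefinite_description => [[q' d']] /= [Ho Heq].
have eq' : q' = q by apply: (@tmap_inj _ _ _ (@valI T M) (@valI_inj T M) _ q' q); rewrite Heq.
subst q'. by rewrite (Hfun _ _ _ _ Ho Hqd).
Qed.
End Good.


Theorem mainTheorem2 (T : theory) (HT : inhabited (model T))
  (m n : nat) (sf : 'I_m -> fsig T) (st : 'I_n -> fsig T)
  (rho : formula sf st)
  (orc : forall i : 'I_n,
           tup (@value T) (st i).1 -> tup (@value T) [:: (st i).2] -> Prop)
  (Hfun : forall i : 'I_n, functional_oracle (def_interface sf (orc i))) :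
  let Is := fun i : 'I_n => def_interface sf (orc i) in
  (* (i) *)
  (forall A : seq (call Is),
     exists (M : model T) (F : finterp M sf) (Th : finterp M st),
       holdsA A F Th) /\
  (* (ii) *)
  ~ (smto_sat rho Is /\ smto_unsat rho Is) /\
  (* (iii) *)
  (forall A : seq (call Is),
     (exists (M : model T) (F : finterp M sf),
        forall Th : finterp M st, holdsA A F Th -> rho M F Th) ->
     forall A' : seq (call Is), List.incl A A' ->
     exists (M : model T) (F : finterp M sf),
        forall Th : finterp M st, holdsA A' F Th -> rho M F Th).
Proof.
move=> Is.
have Hf : forall i q d d', @orc i q d -> @orc i q d' -> d = d'.
  by move=> i q d d'; apply: (Hfun i).
have Hall : forall (M : model T) (F : finterp M sf) (A : seq (call Is)),
    holdsA A F (@goodTh T n st orc M).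
  move=> M F A c _; rewrite /=.
  exact: (@goodTh_ok T n st orc M Hf (c_idx c) (c_q c) (c_r c) (c_ok c)).
case: HT => M0.
have F0 : finterp M0 sf by move=> i _; exact: dom_inhabited.
split; first by move=> A; exists M0, F0, (@goodTh T n st orc M0); apply: Hall.
split.
  move=> [[A [B [M [F HS]]]] [A' [B' Hn]]].
  apply: Hn; exists M, F, (@goodTh T n st orc M); split; first exact: Hall.
  split; first exact: (HS _ (Hall M F A)).1.
  by move=> c _.
move=> A [M [F H]] A' Hinc; exists M, F => Th HA; apply: H => c Hc.
exact: HA (Hinc _ Hc).
Qed.
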